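(* (1) For every $n\in\mathbb{N}$, the alternate Lyndon system $M(u_n\overline{v_n})$, i.e. the set of infinite binary words $x$ with $u_n\overline{v_n}\preceq x_kx_{k+1}\cdots$ for all $k\ge1$, has nonzero (positive) entropy. (2) The alternate Lyndon system $M(\phi^\infty(1))$ associated to $\phi^\infty(1)$ has entropy zero.
   Context: Alternate order: for two words $x=x_1x_2\cdots$, $y=y_1y_2\cdots$ over a finite alphabet of integers, $x\prec y$ iff there is $k$ with $x_i=y_i$ for all $i<k$ and $(-1)^k(x_k-y_k)<0$; $x\preceq y$ iff $x=y$ or $x\prec y$. For an infinite word $(d_i)$, its alternate Lyndon system $M((d_i))$ is the set of infinite words $x$ over $\{0,\dots,d_1\}$ with $d_1d_2\cdots\preceq x_kx_{k+1}\cdots$ for all $k\ge1$; its entropy is $\lim_{n\to\infty}\frac1n\log H_n$, $H_n$ the number of words of length $n$ occurring as finite factors of elements of the system. $\phi$ is the morphism on $\{0,1\}^*$ with $\phi(0)=1$, $\phi(1)=100$; $\phi^\infty(1)=\lim_n\phi^n(1)$. Set $u_n=\phi^n(1)$ for $n\ge0$, $v_0=00$ and $v_n=u_{n-1}u_{n-1}$ for $n>0$. For a finite word $w$, $\overline{w}=www\cdots$. *)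

(* Defs.v *)
(* infinite words are nat -> nat (0-based: x 0 = x_1),
   finite words are lists of nat; entropy uses Stdlib reals. *)
From Stdlib Require Import Reals List Arith.
Import ListNotations.
Open Scope R_scope.

Definition iword := nat -> nat.

(* Alternate order.  Paper index k (1-based) corresponds to j = k-1 here;
   (-1)^k (x_k - y_k) < 0  iff  x_k > y_k when k odd (j even),
                               x_k < y_k when k even (j odd). *)
Definition alt_lt (x y : iword) : Prop :=
  exists j : nat, (forall i : nat, (i < j)%nat -> x i = y i) /\
    (if Nat.even j then (y j < x j)%nat else (x j < y j)%nat).

Definition alt_le (x y : iword) : Prop :=
  (forall i : nat, x i = y i) \/ alt_lt x y.

Definition shift (x : iword) (k : nat) : iword := fun i => x (k + i)%nat.

(* the alternate Lyndon system M(d): words over {0,...,d_1}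
   all of whose suffixes are >= d in the alternate order *)
Definition in_M (d x : iword) : Prop :=
  (forall i : nat, (x i <= d 0%nat)%nat) /\
  (forall k : nat, alt_le d (shift x k)).

Definition factor_of (w : list nat) (x : iword) : Prop :=
  exists k : nat, w = map (fun i => x (k + i)%nat) (seq 0 (length w)).

Definition M_factor (d : iword) (w : list nat) : Prop :=
  exists x : iword, in_M d x /\ factor_of w x.

Definition factor_count (d : iword) (n c : nat) : Prop :=
  exists L : list (list nat), NoDup L /\ length L = c /\
    (forall w : list nat, In w L <-> (length w = n /\ M_factor d w)).

Definition has_entropy (d : iword) (h : R) : Prop :=
  exists H : nat -> nat, (forall n : nat, factor_count d n (H n)) /\
    Un_cv (fun n : nat => ln (INR (H n)) / INR n) h.

Definition phi_letter (a : nat) : list nat :=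
  match a with 0%nat => [1%nat] | _ => [1%nat; 0%nat; 0%nat] end.

Definition phi (w : list nat) : list nat := flat_map phi_letter w.

Definition u (n : nat) : list nat := Nat.iter n phi [1%nat].

Definition v (n : nat) : list nat :=
  match n with 0%nat => [0%nat; 0%nat] | S m => u m ++ u m end.

(* the infinite word p (s s s ...) for finite words p, s (s nonempty) *)
Definition prefix_periodic (p s : list nat) : iword :=
  fun i => if (i <? length p)%nat then nth i p 0%nat
           else nth ((i - length p) mod length s) s 0%nat.

Definition d_n (n : nat) : iword := prefix_periodic (u n) (v n).

(* phi^infty(1): u_n is a prefix of u_{n+1} and |u_{i+1}| > i,
   so the i-th letter of the limit is the i-th letter of u_{i+1} *)
Definition phi_inf : iword := fun i => nth i (u (S i)) 0%nat.

(* Main.v *)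
Require Import Defs.
From Stdlib Require Import Reals Lra Lia List Arith Bool Classical ClassicalEpsilon FinFun.
Import ListNotations.
Open Scope R_scope.

Open Scope nat_scope.

Definition apw (w : list nat) (X : iword) : iword :=
  fun i => if i <? length w then nth i w 0 else X (i - length w).

Definition eqw (x y : iword) : Prop := forall i, x i = y i.

Lemma app_nil X : eqw (apw [] X) X.
Proof. intro i; unfold apw; simpl. f_equal; lia. Qed.

Lemma app_app w1 w2 X : eqw (apw w1 (apw w2 X)) (apw (w1 ++ w2) X).
Proof.
  intro i; unfold apw. rewrite length_app.
  destruct (i <? length w1) eqn:E1.
  - apply Nat.ltb_lt in E1. replace (i <? length w1 + length w2) with true
      by (symmetry; apply Nat.ltb_lt; lia). rewrite app_nth1; auto.
  - apply Nat.ltb_ge in E1.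
    destruct (i - length w1 <? length w2) eqn:E2.
    + apply Nat.ltb_lt in E2. replace (i <? length w1 + length w2) with true
      by (symmetry; apply Nat.ltb_lt; lia). rewrite app_nth2; auto.
    + apply Nat.ltb_ge in E2. replace (i <? length w1 + length w2) with false
      by (symmetry; apply Nat.ltb_ge; lia). f_equal; lia.
Qed.

Lemma app_ext w X Y : eqw X Y -> eqw (apw w X) (apw w Y).
Proof. intros H i; unfold apw; destruct (_ <? _); auto. Qed.

Lemma app_shift w X : eqw (shift (apw w X) (length w)) X.
Proof. intro i; unfold shift, apw. replace (length w + i <? length w) with false
  by (symmetry; apply Nat.ltb_ge; lia). f_equal; lia. Qed.

Lemma app_lt w X i : i < length w -> apw w X i = nth i w 0.
Proof. intro H; unfold apw. apply Nat.ltb_lt in H. now rewrite H. Qed.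

Lemma app_ge w X i : length w <= i -> apw w X i = X (i - length w).
Proof. intro H; unfold apw. apply Nat.ltb_ge in H. now rewrite H. Qed.

Fixpoint sub (x : iword) (k n : nat) : list nat :=
  match n with 0 => [] | S n => x k :: sub x (S k) n end.

Lemma sub_length x k n : length (sub x k n) = n.
Proof. revert k; induction n; simpl; auto. Qed.

Lemma sub_map x k n s : map (fun i => x (k + i)) (seq s n) = sub x (k + s) n.
Proof. revert s; induction n; intro s; simpl; auto. rewrite IHn. f_equal. f_equal; lia. Qed.

Lemma sub_ext x y k n : eqw x y -> sub x k n = sub y k n.
Proof. intro H; revert k; induction n; intro k; simpl; auto. rewrite H, IHn; auto. Qed.

Lemma sub_add x k m n : sub x k (m + n) = sub x k m ++ sub x (k + m) n.
Proof. revert k; induction m; intro k; simpl. f_equal; lia.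
  rewrite IHm. f_equal. f_equal. f_equal. lia. Qed.

Lemma sub_shift x k q n : sub (shift x q) k n = sub x (q + k) n.
Proof. revert k; induction n; intro k; simpl; auto. rewrite IHn. f_equal. f_equal; lia. Qed.

Lemma sub_nth x k n i : i < n -> nth i (sub x k n) 0 = x (k + i).
Proof. revert k i; induction n; intros k i H; [lia|]. destruct i; simpl. f_equal; lia.
  rewrite IHn by lia. f_equal; lia. Qed.

Lemma prefix_split x q : eqw x (apw (sub x 0 q) (shift x q)).
Proof. intro i. destruct (Nat.lt_ge_cases i q).
  - rewrite app_lt by (rewrite sub_length; auto). rewrite sub_nth; auto.
  - rewrite app_ge by (rewrite sub_length; auto). unfold shift. rewrite sub_length. f_equal; lia.
Qed.

Lemma sub_app_lt w X k n : k + n <= length w -> sub (apw w X) k n = firstn n (skipn k w).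
Proof. intro H. apply nth_ext with 0 0.
  - rewrite sub_length, length_firstn, length_skipn. lia.
  - intros i Hi. rewrite sub_length in Hi. rewrite sub_nth by auto.
    rewrite nth_firstn. replace (i <? n) with true by (symmetry; apply Nat.ltb_lt; lia).
    rewrite nth_skipn. apply app_lt. lia.
Qed.

Lemma sub_app_ge w X k n : length w <= k -> sub (apw w X) k n = sub X (k - length w) n.
Proof. intro H. revert k H; induction n; intros k H; simpl; auto.
  rewrite app_ge by lia. rewrite IHn by lia. f_equal. f_equal. lia. Qed.

Lemma sub_app_mid w X k n : k <= length w <= k + n ->
  sub (apw w X) k n = skipn k w ++ sub X 0 (n - (length w - k)).
Proof. intro H. replace n with ((length w - k) + (n - (length w - k))) at 1 by lia.
  rewrite sub_add. rewrite sub_app_lt by lia. rewrite sub_app_ge by lia.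
  f_equal. rewrite firstn_all2; auto. rewrite length_skipn; lia. f_equal; lia.
Qed.

Lemma sub_app0 w X : sub (apw w X) 0 (length w) = w.
Proof. rewrite sub_app_lt by lia. simpl. apply firstn_all. Qed.

Lemma sub_const c k n : sub (fun _ => c) k n = repeat c n.
Proof. revert k; induction n; simpl; intros; auto. now rewrite IHn. Qed.

Open Scope nat_scope.

Fixpoint PhiF (f : nat) (y : iword) (i : nat) : nat :=
  match f with 0 => 0 | S f =>
    match i with 0 => 1 | S i' =>
      if y 0 =? 0 then PhiF f (shift y 1) i'
      else match i' with 0 => 0 | S 0 => 0 | S (S i'') => PhiF f (shift y 1) i'' end
    end end.

Definition Phi (y : iword) : iword := fun i => PhiF (S i) y i.

Lemma PhiF_fuel f f' y i : i < f -> i < f' -> PhiF f y i = PhiF f' y i.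
Proof. revert f' y i; induction f; intros f' y i H H'; [lia|]. destruct f'; [lia|].
  simpl. destruct i; auto. destruct (y 0 =? 0). apply IHf; lia.
  destruct i; auto. destruct i; auto. apply IHf; lia. Qed.

Lemma PhiF_ext f y y' i : eqw y y' -> PhiF f y i = PhiF f y' i.
Proof. revert y y' i; induction f; intros y y' i H; simpl; auto.
  destruct i; auto. rewrite (H 0). assert (eqw (shift y 1) (shift y' 1)) by (intro j; apply H).
  destruct (y' 0 =? 0); auto. destruct i; auto. destruct i; auto. Qed.

Lemma Phi_ext y y' : eqw y y' -> eqw (Phi y) (Phi y').
Proof. intros H i. apply PhiF_ext; auto. Qed.

Lemma PhiF_S f y i : PhiF (S f) y (S i) =
  if y 0 =? 0 then PhiF f (shift y 1) i
  else match i with 0 => 0 | S 0 => 0 | S (S i'') => PhiF f (shift y 1) i'' end.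
Proof. reflexivity. Qed.

Lemma Phi_unfold y : eqw (Phi y) (apw (phi_letter (y 0)) (Phi (shift y 1))).
Proof. intro i. unfold Phi, apw. destruct i as [|i]. destruct (y 0); reflexivity.
  rewrite PhiF_S. destruct (y 0) eqn:E.
  - cbn -[PhiF]. replace (i - 0) with i by lia. apply PhiF_fuel; lia.
  - cbn -[PhiF]. destruct i as [|[|i]]; cbn -[PhiF]; auto.
    replace (i - 0) with i by lia. apply PhiF_fuel; lia.
Qed.

Lemma eqw_trans x y z : eqw x y -> eqw y z -> eqw x z.
Proof. intros H1 H2 i; rewrite H1; auto. Qed.
Lemma eqw_sym x y : eqw x y -> eqw y x.
Proof. intros H i; auto. Qed.
Lemma eqw_refl x : eqw x x.
Proof. intro; auto. Qed.

Lemma shift_ext x y q : eqw x y -> eqw (shift x q) (shift y q).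
Proof. intros H i; apply H. Qed.

Lemma app_cons a w X : eqw (apw (a :: w) X) (apw [a] (apw w X)).
Proof. eapply eqw_trans. 2: apply eqw_sym, app_app. apply eqw_refl. Qed.

Lemma phi_app w1 w2 : phi (w1 ++ w2) = phi w1 ++ phi w2.
Proof. unfold phi. apply flat_map_app. Qed.

Lemma phi_cons a w : phi (a :: w) = phi_letter a ++ phi w.
Proof. reflexivity. Qed.

Lemma Phi_app w X : eqw (Phi (apw w X)) (apw (phi w) (Phi X)).
Proof. revert X; induction w as [|a w IH]; intro X.
  - simpl. eapply eqw_trans. apply Phi_ext, app_nil. apply eqw_sym, app_nil.
  - eapply eqw_trans. apply Phi_unfold.
    assert (E0 : apw (a :: w) X 0 = a) by reflexivity. rewrite E0.
    assert (eqw (shift (apw (a::w) X) 1) (apw w X)).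
    { eapply eqw_trans. apply shift_ext, app_cons. apply (app_shift [a]). }
    eapply eqw_trans. apply app_ext, Phi_ext, H.
    eapply eqw_trans. apply app_ext, IH. rewrite phi_cons. apply app_app.
Qed.

Lemma Phi_bin y i : Phi y i <= 1.
Proof. unfold Phi. generalize (S i). intro f. revert y i; induction f; intros y i; simpl; auto.
  destruct i; auto. destruct (y 0 =? 0); auto. destruct i; auto. destruct i; auto. Qed.

Lemma Phi_0 y : Phi y 0 = 1.
Proof. reflexivity. Qed.

Lemma phi_letter_len a : length (phi_letter a) = if a =? 0 then 1 else 3.
Proof. destruct a; reflexivity. Qed.

Lemma Phi_prefix y q : eqw (Phi y) (apw (phi (sub y 0 q)) (Phi (shift y q))).
Proof. eapply eqw_trans. apply Phi_ext, prefix_split. apply Phi_app. Qed.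

Lemma phi_len_ge w : length w <= length (phi w).
Proof. induction w; simpl; auto. rewrite length_app, phi_letter_len. destruct (a =? 0); lia. Qed.

Lemma phi_len_app w1 w2 : length (phi (w1 ++ w2)) = length (phi w1) + length (phi w2).
Proof. rewrite phi_app, length_app; auto. Qed.

Lemma pos_cover (f : nat -> nat) : f 0 = 0 -> (forall q, f q < f (S q)) ->
  forall k, exists q, f q <= k < f (S q).
Proof. intros H0 Hs k. induction k.
  - exists 0. rewrite H0. specialize (Hs 0). lia.
  - destruct IHk as [q Hq]. destruct (Nat.eq_dec (S k) (f (S q))).
    + exists (S q). specialize (Hs (S q)). lia.
    + exists q. lia.
Qed.

Lemma sub_S x k n : sub x k (S n) = sub x k n ++ [x (k + n)].
Proof. replace (S n) with (n + 1) by lia. rewrite sub_add. reflexivity. Qed.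

Lemma phi_single a : phi [a] = phi_letter a.
Proof. unfold phi; simpl. apply app_nil_r. Qed.

Lemma Phi_blocks y k : exists q, (Phi y k = 0 \/ (k = length (phi (sub y 0 q)))) /\
   length (phi (sub y 0 q)) <= k.
Proof.
  destruct (pos_cover (fun q => length (phi (sub y 0 q)))) with (k := k) as [q Hq].
  - reflexivity.
  - intro q. rewrite sub_S, phi_len_app, phi_single, phi_letter_len.
    destruct (y (0 + q) =? 0); lia.
  - exists q. split; [|lia].
    rewrite sub_S, phi_len_app, phi_single in Hq.
    destruct (Nat.eq_dec k (length (phi (sub y 0 q)))); auto. left.
    rewrite (Phi_prefix y (S q)). rewrite sub_S, phi_app, phi_single.
    rewrite app_lt by (rewrite length_app; lia).
    rewrite app_nth2 by lia.
    destruct (y (0 + q)) eqn:E; simpl in Hq |- *; [lia|].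
    destruct (k - length (phi (sub y 0 q))) as [|[|[|]]] eqn:E2; simpl; try lia; auto.
Qed.

Open Scope nat_scope.

Definition ltp (b : bool) (x y : iword) (j : nat) : Prop :=
  (forall i, i < j -> x i = y i) /\
  (if Bool.eqb (Nat.even j) b then y j < x j else x j < y j).

Lemma alt_lt_ltp x y : alt_lt x y <-> exists j, ltp true x y j.
Proof. unfold alt_lt, ltp. split; intros [j [H1 H2]]; exists j; split; auto;
  destruct (Nat.even j); auto. Qed.

Lemma ltp_ext b x x' y y' j : eqw x x' -> eqw y y' -> ltp b x y j -> ltp b x' y' j.
Proof. intros Hx Hy [H1 H2]. split. intros i Hi; rewrite <- Hx, <- Hy; auto.
  rewrite <- Hx, <- Hy; auto. Qed.

Lemma ltp_apw b w X Y j : ltp b X Y j ->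
  ltp (if Nat.even (length w) then b else negb b) (apw w X) (apw w Y) (length w + j).
Proof. intros [H1 H2]. split.
  - intros i Hi. unfold apw. destruct (i <? length w) eqn:E; auto.
    apply Nat.ltb_ge in E. apply H1. lia.
  - rewrite !app_ge by lia. replace (length w + j - length w) with j by lia.
    rewrite Nat.even_add. destruct (Nat.even (length w)), (Nat.even j), b; simpl in *; auto.
Qed.

Lemma ltp_S b x y j : ltp b x y (S j) -> x 0 = y 0 /\ ltp (negb b) (shift x 1) (shift y 1) j.
Proof. intros [H1 H2]. split. apply H1; lia. split.
  - intros i Hi. unfold shift. apply H1. lia.
  - unfold shift. simpl. rewrite Nat.even_succ, <- Nat.negb_even in H2.
    destruct (Nat.even j), b; simpl in *; auto.
Qed.

Definition binary (x : iword) := forall i, x i <= 1.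

Lemma binary_shift x q : binary x -> binary (shift x q).
Proof. intros H i; apply H. Qed.

Lemma Phi_binary y : binary (Phi y).
Proof. intro i; apply Phi_bin. Qed.

Lemma Phi_mono j : forall b x y, binary x -> binary y -> ltp b x y j ->
  exists j', ltp b (Phi x) (Phi y) j'.
Proof. induction j; intros b x y Hx Hy H.
  - destruct H as [_ H2]. simpl in H2. pose proof (Hx 0); pose proof (Hy 0).
    exists 1. split.
    + intros i Hi. replace i with 0 by lia. reflexivity.
    + rewrite (Phi_unfold x 1), (Phi_unfold y 1).
      destruct b; simpl in H2.
      * replace (y 0) with 0 by lia. replace (x 0) with 1 by lia. simpl.
        unfold apw; simpl. rewrite Phi_0; lia.
      * replace (y 0) with 1 by lia. replace (x 0) with 0 by lia. simpl.
        unfold apw; simpl. rewrite Phi_0; lia.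
  - apply ltp_S in H. destruct H as [E H].
    destruct (IHj _ _ _ (binary_shift _ _ Hx) (binary_shift _ _ Hy) H) as [j' Hj'].
    apply (ltp_apw _ (phi_letter (x 0))) in Hj'.
    assert (Hp : (if Nat.even (length (phi_letter (x 0))) then negb b else negb (negb b)) = b)
      by (destruct (x 0); destruct b; reflexivity). rewrite Hp in Hj'.
    exists (length (phi_letter (x 0)) + j').
    eapply ltp_ext. 3: exact Hj'.
    + apply eqw_sym, Phi_unfold.
    + rewrite E. apply eqw_sym, Phi_unfold.
Qed.

Lemma ltp_irrefl b x j : ltp b x x j -> False.
Proof. intros [_ H]. destruct (Bool.eqb _ _); lia. Qed.

Lemma ltp_asym b x y j j' : ltp b x y j -> ltp b y x j' -> False.
Proof. intros [H1 H2] [H1' H2'].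
  destruct (Nat.lt_total j j') as [Hl|[He|Hl]].
  - specialize (H1' j Hl). destruct (Bool.eqb _ _); lia.
  - subst. destruct (Bool.eqb _ _); lia.
  - specialize (H1 j' Hl). destruct (Bool.eqb (Nat.even j') b); lia.
Qed.

Lemma least_ex (P : nat -> Prop) : (exists n, P n) -> exists n, P n /\ forall m, m < n -> ~ P m.
Proof. intros [n Hn]. revert Hn. induction n as [n IH] using lt_wf_ind. intro Hn.
  destruct (classic (exists m, m < n /\ P m)) as [[m [Hm1 Hm2]]|Hno].
  - apply (IH m Hm1 Hm2).
  - exists n. split; auto. intros m Hm HP. apply Hno; eauto.
Qed.

Lemma ltp_trich b x y : eqw x y \/ (exists j, ltp b x y j) \/ (exists j, ltp b y x j).
Proof. destruct (classic (exists i, x i <> y i)) as [Hd|Hn].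
  - apply least_ex in Hd. destruct Hd as [j [Hj Hl]]. right.
    assert (Hb : forall i, i < j -> x i = y i) by (intros i Hi; apply NNPP; apply Hl; auto).
    destruct (Nat.lt_total (x j) (y j)) as [H|[H|H]]; [|contradiction|].
    + destruct (Bool.eqb (Nat.even j) b) eqn:E.
      * right. exists j. split. intros; symmetry; auto. rewrite E; auto.
      * left. exists j. split; auto. rewrite E; auto.
    + destruct (Bool.eqb (Nat.even j) b) eqn:E.
      * left. exists j. split; auto. rewrite E; auto.
      * right. exists j. split. intros; symmetry; auto. rewrite E; auto.
  - left. intro i. apply NNPP. intro H. apply Hn; eauto.
Qed.

Lemma alt_le_ext d d' y y' : eqw d d' -> eqw y y' -> alt_le d y -> alt_le d' y'.
Proof. intros Hd Hy [H|H].
  - left. intro i. rewrite <- Hd, <- Hy; auto.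
  - right. apply alt_lt_ltp in H. apply alt_lt_ltp. destruct H as [j H]. exists j.
    eapply ltp_ext; eauto.
Qed.

Lemma Phi_le x y : binary x -> binary y -> alt_le x y -> alt_le (Phi x) (Phi y).
Proof. intros Hx Hy [H|H].
  - left. apply Phi_ext; auto.
  - right. apply alt_lt_ltp in H. apply alt_lt_ltp. destruct H as [j H].
    eapply Phi_mono; eauto.
Qed.

Lemma Phi_le_refl x y : binary x -> binary y -> alt_le (Phi x) (Phi y) -> alt_le x y.
Proof. intros Hx Hy H. destruct (ltp_trich true x y) as [E|[[j Hj]|[j Hj]]].
  - left; auto.
  - right. apply alt_lt_ltp; eauto.
  - exfalso. destruct (Phi_mono _ _ _ _ Hy Hx Hj) as [j' Hj'].
    destruct H as [E|H].
    + apply (ltp_irrefl true (Phi x) j'). eapply ltp_ext. 3: exact Hj'.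
      intro i; rewrite E; auto. apply eqw_refl.
    + apply alt_lt_ltp in H. destruct H as [j'' H]. eapply ltp_asym; eauto.
Qed.

Open Scope nat_scope.

Lemma shift_shift x a b : eqw (shift (shift x a) b) (shift x (a + b)).
Proof. intro i; unfold shift. f_equal; lia. Qed.

Lemma in_M_ext d d' x x' : eqw d d' -> eqw x x' -> in_M d x -> in_M d' x'.
Proof. intros Hd Hx [H1 H2]. split.
  - intro i. rewrite <- Hx, <- Hd; auto.
  - intro k. eapply alt_le_ext. 3: apply (H2 k). auto. apply shift_ext; auto.
Qed.

Lemma in_M_shift d x q : in_M d x -> in_M d (shift x q).
Proof. intros [H1 H2]. split. intro i; apply H1.
  intro k. eapply alt_le_ext. 3: apply (H2 (q + k)). apply eqw_refl. apply eqw_sym, shift_shift.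
Qed.

Lemma zero_in_M' d : d 0 = 1 -> in_M d (fun _ => 0).
Proof. intro H. split. intro; lia. intro k. right. exists 0. split. intros; lia.
  simpl. unfold shift. lia. Qed.

Lemma in_M_binary e y : e 0 = 1 -> in_M e y -> binary y.
Proof. intros H [H1 _] i. rewrite <- H. apply H1. Qed.

Lemma shift_Phi_pos y q : eqw (shift (Phi y) (length (phi (sub y 0 q)))) (Phi (shift y q)).
Proof. eapply eqw_trans. apply shift_ext, Phi_prefix. apply app_shift. Qed.

Lemma Fwd e y : binary e -> e 0 = 1 -> in_M e y -> in_M (Phi e) (Phi y).
Proof. intros Be He HM. assert (By := in_M_binary _ _ He HM). split.
  - intro i. rewrite Phi_0. apply Phi_bin.
  - intro k. destruct (Phi_blocks y k) as [q [[H0|Hk] _]].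
    + right. exists 0. split. intros; lia. simpl. unfold shift. rewrite Nat.add_0_r, H0, Phi_0. lia.
    + subst k. eapply alt_le_ext. apply eqw_refl. apply eqw_sym, shift_Phi_pos.
      apply Phi_le; auto. apply binary_shift; auto. apply HM.
Qed.

Lemma Phi_e_vals e : e 0 = 1 -> Phi e 1 = 0 /\ Phi e 2 = 0 /\ Phi e 3 = 1.
Proof. intro H. rewrite !(Phi_unfold e). rewrite H. unfold apw. simpl. auto. Qed.

Lemma Bwd_struct e x : e 0 = 1 -> in_M (Phi e) x ->
  forall k, x k = 1 -> x (k + 1) = 1 \/ (x (k + 1) = 0 /\ x (k + 2) = 0 /\ x (k + 3) = 1).
Proof. intros He HM k Hk. assert (Bx : binary x) by (apply (in_M_binary (Phi e)); auto).
  destruct (Phi_e_vals e He) as [E1 [E2 E3]].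
  destruct HM as [_ HM]. specialize (HM k).
  pose proof (Bx (k+1)); pose proof (Bx (k+2)); pose proof (Bx (k+3)).
  destruct HM as [Heq|Hlt].
  - right. unfold shift in Heq. rewrite <- !Heq. auto.
  - destruct Hlt as [j [Hb Hj]]. unfold shift in *.
    destruct j as [|[|[|[|j]]]]; simpl in Hj.
    + rewrite Phi_0, Nat.add_0_r in Hj. lia.
    + rewrite E1 in Hj. left. lia.
    + specialize (Hb 1 ltac:(lia)). rewrite E1 in Hb. rewrite E2 in Hj. lia.
    + specialize (Hb 1 ltac:(lia)). rewrite E3 in Hj. lia.
    + right. pose proof (Hb 1 ltac:(lia)); pose proof (Hb 2 ltac:(lia)); pose proof (Hb 3 ltac:(lia)).
      rewrite E1 in *; rewrite E2 in *; rewrite E3 in *. lia.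
Qed.

Definition Str (x : iword) : Prop := binary x /\
  forall k, x k = 1 -> x (k + 1) = 1 \/ (x (k + 1) = 0 /\ x (k + 2) = 0 /\ x (k + 3) = 1).

Lemma Str_shift x q : Str x -> Str (shift x q).
Proof. intros [B H]. split. apply binary_shift; auto.
  intros k Hk. unfold shift in *. specialize (H (q + k) Hk).
  rewrite !Nat.add_assoc. auto. Qed.

Fixpoint dec (q : nat) (x : iword) : nat :=
  match q with
  | 0 => if x 1 =? 1 then 0 else 1
  | S q => dec q (shift x (if x 1 =? 1 then 1 else 3))
  end.

Definition decw (x : iword) : iword := fun q => dec q x.

Lemma dec_bin q x : dec q x <= 1.
Proof. revert x; induction q; intro x; simpl. destruct (x 1 =? 1); lia. apply IHq. Qed.

Lemma dec_ok i : forall x, Str x -> x 0 = 1 -> x i = Phi (decw x) i.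
Proof. induction i as [i IH] using lt_wf_ind. intros x Sx H0.
  rewrite (Phi_unfold (decw x) i).
  assert (Hsh : forall l, (l = if x 1 =? 1 then 1 else 3) ->
     eqw (shift (decw x) 1) (decw (shift x l))).
  { intros l Hl q. unfold shift, decw. simpl. now rewrite <- Hl. }
  destruct Sx as [B Hs]. pose proof (Hs 0 H0) as Hs0. simpl in Hs0.
  unfold decw at 1. simpl dec.
  destruct (x 1 =? 1) eqn:E1.
  - apply Nat.eqb_eq in E1. simpl. unfold apw. simpl.
    destruct i as [|i]; simpl; auto.
    rewrite <- (Phi_ext _ _ (eqw_sym _ _ (Hsh 1 eq_refl))).
    replace (i - 0) with i by lia.
    rewrite <- IH; auto. apply Str_shift. split; auto.
  - apply Nat.eqb_neq in E1. destruct Hs0 as [Hs0|[Ha [Hb Hc]]]; [contradiction|].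
    unfold apw. simpl.
    destruct i as [|[|[|i]]]; simpl; auto.
    rewrite <- (Phi_ext _ _ (eqw_sym _ _ (Hsh 3 eq_refl))).
    replace (i - 0) with i by lia.
    rewrite <- IH; try lia. unfold shift. f_equal; lia.
    apply Str_shift. split; auto. unfold shift. auto.
Qed.

Lemma sub_zero x m : (forall i, i < m -> x i = 0) -> sub x 0 m = repeat 0 m.
Proof. intro H. apply nth_ext with 0 0. rewrite sub_length, repeat_length; auto.
  intros i Hi. rewrite sub_length in Hi. rewrite sub_nth, nth_repeat; auto. Qed.

Lemma Bwd e x : binary e -> e 0 = 1 -> in_M (Phi e) x ->
  eqw x (fun _ => 0) \/ exists m y, in_M e y /\ eqw x (apw (repeat 0 m) (Phi y)).
Proof. intros Be He HM.
  assert (Bx : binary x) by (apply (in_M_binary (Phi e)); auto).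
  assert (Sx : Str x) by (split; auto; apply (Bwd_struct e); auto).
  destruct (classic (exists m, x m = 1)) as [Hm|Hn].
  - right. apply least_ex in Hm. destruct Hm as [m [Hm Hl]].
    set (y := decw (shift x m)). exists m, y.
    assert (Ey : eqw (shift x m) (Phi y)).
    { intro i. apply dec_ok. apply Str_shift; auto. unfold shift. rewrite Nat.add_0_r; auto. }
    assert (Ex : eqw x (apw (repeat 0 m) (Phi y))).
    { eapply eqw_trans. apply (prefix_split x m). rewrite sub_zero.
      apply app_ext; auto. intros i Hi. specialize (Hl i Hi). specialize (Bx i). lia. }
    split; auto. split.
    + intro i. rewrite He. apply dec_bin.
    + intro q. apply Phi_le_refl; auto. apply binary_shift. intro; apply dec_bin.
      eapply alt_le_ext. apply eqw_refl. 2: apply (proj2 HM (m + length (phi (sub y 0 q)))).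
      eapply eqw_trans. apply eqw_sym, shift_shift.
      eapply eqw_trans. apply shift_ext, Ey. apply shift_Phi_pos.
  - left. intro i. specialize (Bx i). destruct (Nat.eq_dec (x i) 1); [|lia].
    exfalso; eauto.
Qed.

Open Scope nat_scope.

Definition per (s : list nat) : iword := fun i => nth (i mod length s) s 0.

Lemma pp_apw p s : eqw (prefix_periodic p s) (apw p (per s)).
Proof. intro i; reflexivity. Qed.

Lemma per_fix s : s <> [] -> eqw (per s) (apw s (per s)).
Proof. intros Hs i. assert (L : length s <> 0) by (destruct s; simpl; congruence).
  unfold per, apw. destruct (i <? length s) eqn:E.
  - apply Nat.ltb_lt in E. rewrite Nat.mod_small; auto.
  - apply Nat.ltb_ge in E. f_equal.
    replace i with ((i - length s) + 1 * length s) at 1 by lia.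
    rewrite Nat.Div0.mod_add. auto.
Qed.

Lemma fix_unique w X Y : w <> [] -> eqw X (apw w X) -> eqw Y (apw w Y) -> eqw X Y.
Proof. intros Hw HX HY i. induction i as [i IH] using lt_wf_ind.
  rewrite HX, HY. unfold apw. destruct (i <? length w) eqn:E; auto.
  apply Nat.ltb_ge in E. apply IH. destruct w; simpl in *; [congruence|lia].
Qed.

Lemma phi_nonempty w : w <> [] -> phi w <> [].
Proof. destruct w as [|a w]; [congruence|]. intros _. rewrite phi_cons. destruct a; simpl; congruence. Qed.

Lemma Phi_per s : s <> [] -> eqw (Phi (per s)) (per (phi s)).
Proof. intro Hs. apply (fix_unique (phi s)). apply phi_nonempty; auto.
  - eapply eqw_trans. apply Phi_ext, per_fix; auto. apply Phi_app.
  - apply per_fix, phi_nonempty; auto.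
Qed.

Lemma u_S n : u (S n) = phi (u n).
Proof. reflexivity. Qed.

Lemma u_nonempty n : u n <> [].
Proof. induction n. simpl; congruence. rewrite u_S. apply phi_nonempty; auto. Qed.

Lemma v_S n : v (S n) = phi (v n).
Proof. destruct n. reflexivity. change (u (S n) ++ u (S n) = phi (u n ++ u n)). rewrite u_S, phi_app. reflexivity. Qed.

Lemma v_nonempty n : v n <> [].
Proof. induction n. simpl; congruence. rewrite v_S. apply phi_nonempty; auto. Qed.

Lemma dn_S n : eqw (d_n (S n)) (Phi (d_n n)).
Proof. unfold d_n. eapply eqw_trans. apply pp_apw.
  eapply eqw_trans. 2: apply eqw_sym, Phi_ext, pp_apw.
  eapply eqw_trans. 2: apply eqw_sym, Phi_app.
  rewrite u_S, v_S. apply app_ext. apply eqw_sym, Phi_per, v_nonempty.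
Qed.

Lemma dn_0_1 n : d_n n 0 = 1.
Proof. destruct n. reflexivity. rewrite dn_S. apply Phi_0. Qed.

Lemma dn_bin n : binary (d_n n).
Proof. destruct n.
  - intro i. unfold d_n, prefix_periodic.
    destruct (i <? length (u 0)). destruct i as [|[|]]; simpl; lia.
    generalize ((i - length (u 0)) mod length (v 0)); intros k; destruct k as [|[|[|]]]; simpl; lia.
  - intro i. rewrite dn_S. apply Phi_bin.
Qed.

Lemma u_prefix n : exists t, u (S n) = u n ++ t.
Proof. induction n. exists [0;0]. reflexivity.
  destruct IHn as [t Ht]. exists (phi t). rewrite (u_S (S n)). rewrite Ht at 1. rewrite phi_app. reflexivity. Qed.

Lemma u_prefix_le n m : n <= m -> exists t, u m = u n ++ t.
Proof. induction 1. exists []. rewrite app_nil_r; auto.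
  destruct IHle as [t Ht]. destruct (u_prefix m) as [t' Ht']. exists (t ++ t').
  rewrite Ht', Ht, app_assoc; auto. Qed.

Lemma u_head n : exists t, u n = 1 :: t.
Proof. induction n. exists []; reflexivity. destruct IHn as [t Ht].
  rewrite u_S, Ht, phi_cons. exists ([0;0] ++ phi t). reflexivity. Qed.

Lemma u_len n : n < length (u n).
Proof. induction n. simpl; lia. rewrite u_S. destruct (u_head n) as [t Ht].
  rewrite Ht in *. rewrite phi_cons. simpl. pose proof (phi_len_ge t).
  simpl in IHn. lia. Qed.

Lemma u_nth n m i : i < length (u n) -> i < length (u m) -> nth i (u n) 0 = nth i (u m) 0.
Proof. intros H1 H2. destruct (Nat.le_ge_cases n m) as [H|H].
  - destruct (u_prefix_le _ _ H) as [t Ht]. rewrite Ht, app_nth1; auto.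
  - destruct (u_prefix_le _ _ H) as [t Ht]. rewrite Ht, app_nth1; auto.
Qed.

Lemma phi_inf_u n i : i < length (u n) -> phi_inf i = nth i (u n) 0.
Proof. intro H. unfold phi_inf. apply u_nth; auto. pose proof (u_len (S i)); lia. Qed.

Lemma phi_inf_fix : eqw phi_inf (Phi phi_inf).
Proof. intro i. set (N := S i).
  assert (HN : sub phi_inf 0 (length (u N)) = u N).
  { apply nth_ext with 0 0. rewrite sub_length; auto.
    intros j Hj. rewrite sub_length in Hj. rewrite sub_nth; auto. apply phi_inf_u; auto. }
  rewrite (Phi_prefix phi_inf (length (u N))). rewrite HN, <- u_S.
  pose proof (u_len N). destruct (u_prefix N) as [t Ht].
  assert (i < length (u (S N))) by (rewrite Ht, length_app; unfold N in *; lia).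
  rewrite app_lt by auto. apply phi_inf_u; auto.
Qed.

Lemma phi_inf_0 : phi_inf 0 = 1.
Proof. reflexivity. Qed.
Lemma phi_inf_bin : binary phi_inf.
Proof. intro i. rewrite phi_inf_fix. apply Phi_bin. Qed.

Open Scope nat_scope.

Lemma M_factor_sub d x k n : in_M d x -> M_factor d (sub x k n).
Proof. intro H. exists x. split; auto. exists k. rewrite sub_length.
  rewrite (sub_map x k n 0). rewrite Nat.add_0_r; auto. Qed.

Lemma M_factor_inv d w : M_factor d w -> exists x k, in_M d x /\ w = sub x k (length w).
Proof. intros [x [Hx [k Hk]]]. exists x, k. split; auto. rewrite Hk at 1.
  rewrite (sub_map x k _ 0). rewrite Nat.add_0_r; auto. Qed.

Fixpoint allw (b n : nat) : list (list nat) :=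
  match n with 0 => [[]] | S n => flat_map (fun a => map (cons a) (allw b n)) (seq 0 (S b)) end.

Lemma allw_spec b n w : length w = n -> (forall i, In i w -> i <= b) -> In w (allw b n).
Proof. revert w; induction n; intros w Hl Hb.
  - destruct w; simpl in *; auto; lia.
  - destruct w as [|a w]; simpl in Hl; [lia|]. cbn [allw]. apply in_flat_map. exists a. split.
    + apply in_seq. assert (a <= b) by (apply Hb; simpl; auto). lia.
    + apply in_map. apply IHn; auto. intros i Hi; apply Hb; simpl; auto.
Qed.

Lemma classical_filter (P : list nat -> Prop) (C : list (list nat)) :
  exists L, NoDup L /\ forall w, In w L <-> In w C /\ P w.
Proof. induction C as [|a C [L [HN HL]]].
  - exists []. split. constructor. intro w; simpl; tauto.
  - destruct (classic (P a /\ ~ In a L)) as [[Pa Na]|Hn].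
    + exists (a :: L). split. constructor; auto. intro w. simpl. rewrite HL.
      split. intros [<-|[H1 H2]]; auto. intros [[<-|H1] H2]; auto.
    + exists L. split; auto. intro w. rewrite HL. simpl. split. tauto.
      intros [[<-|H1] H2]; auto. apply NNPP. intro Hn'. apply Hn. split; auto.
      intro Hin. apply Hn'. apply HL in Hin; tauto.
Qed.

Lemma fc_exists d n : exists c, factor_count d n c.
Proof. destruct (classical_filter (fun w => length w = n /\ M_factor d w) (allw (d 0) n)) as [L [HN HL]].
  exists (length L), L. split; auto. split; auto. intro w. rewrite HL. split. tauto.
  intros [H1 H2]. split; auto. apply allw_spec; auto.
  destruct (M_factor_inv _ _ H2) as [x [k [Hx Hw]]]. rewrite Hw.
  intros i Hi. apply In_nth with (d := 0) in Hi. destruct Hi as [j [Hj Hj']].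
  rewrite sub_length in Hj. rewrite sub_nth in Hj' by auto. rewrite <- Hj'. apply Hx.
Qed.

Lemma count_upper d n c L' : factor_count d n c ->
  (forall w, length w = n -> M_factor d w -> In w L') -> c <= length L'.
Proof. intros [L [HN [Hc HL]]] H. subst c. apply NoDup_incl_length; auto.
  intros w Hw. apply HL in Hw. apply H; tauto. Qed.

Lemma count_lower d n c L' : factor_count d n c -> NoDup L' ->
  (forall w, In w L' -> length w = n /\ M_factor d w) -> length L' <= c.
Proof. intros [L [HN [Hc HL]]] HN' H. subst c. apply NoDup_incl_length; auto.
  intros w Hw. apply HL. auto. Qed.

Definition prodw (A B : list (list nat)) : list (list nat) :=
  flat_map (fun a => map (fun b => a ++ b) B) A.

Lemma prodw_len A B : length (prodw A B) = length A * length B.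
Proof. induction A; simpl; auto. unfold prodw in *. simpl. rewrite length_app, length_map, IHA. auto. Qed.

Lemma prodw_in A B a b : In a A -> In b B -> In (a ++ b) (prodw A B).
Proof. intros Ha Hb. apply in_flat_map. exists a. split; auto. apply in_map; auto. Qed.

Lemma fc_list d n c : factor_count d n c -> exists L, length L = c /\
  forall w, length w = n -> M_factor d w -> In w L.
Proof. intros [L [HN [Hc HL]]]. exists L. split; auto. intros; apply HL; auto. Qed.

Lemma fc_submult d m n a b c : factor_count d m a -> factor_count d n b ->
  factor_count d (m + n) c -> c <= a * b.
Proof. intros Ha Hb Hc. destruct (fc_list _ _ _ Ha) as [A [HA HA']].
  destruct (fc_list _ _ _ Hb) as [B [HB HB']]. subst a b. rewrite <- prodw_len.
  apply (count_upper d (m + n)); auto. intros w Hl Hw.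
  destruct (M_factor_inv _ _ Hw) as [x [k [Hx Hw']]]. rewrite Hw', Hl, sub_add.
  apply prodw_in. apply HA'. apply sub_length. apply M_factor_sub; auto.
  apply HB'. apply sub_length. apply M_factor_sub; auto.
Qed.

Lemma fc_pos d n c : d 0 = 1 -> factor_count d n c -> 1 <= c.
Proof. intros Hd Hc. change 1 with (length [sub (fun _ => 0) 0 n]).
  apply (count_lower d n); auto. constructor; auto. constructor.
  intros w [<-|[]]. split. apply sub_length. apply M_factor_sub, zero_in_M'; auto.
Qed.

Lemma fc_unique d n c c' : factor_count d n c -> factor_count d n c' -> c = c'.
Proof. intros H1 H2. destruct H2 as [L [HN [Hc HL]]]. apply Nat.le_antisymm.
  - subst c'. apply (count_upper d n); auto. intros; apply HL; auto.
  - subst c'. apply (count_lower d n); auto. intros; apply HL; auto.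
Qed.

Open Scope R_scope.

Lemma nat_big (A : R) : exists N : nat, A < INR N.
Proof. destruct (INR_archimed 1 A) as [n Hn]; [lra|]. exists n. lra. Qed.

Lemma div_nn x y : 0 <= x -> 0 < y -> 0 <= x / y.
Proof. intros; unfold Rdiv; apply Rmult_le_pos; auto. left; apply Rinv_0_lt_compat; auto. Qed.


Fixpoint maxa (a : nat -> R) (m : nat) : R := match m with O => 0 | S m => Rmax (a m) (maxa a m) end.

Lemma maxa_ge (a : nat -> R) m r : (r < m)%nat -> a r <= maxa a m.
Proof. induction m; intro H; [lia|]. simpl. destruct (Nat.eq_dec r m).
  subst; apply Rmax_l. eapply Rle_trans. apply IHm; lia. apply Rmax_r. Qed.

Lemma maxa_nn (a : nat -> R) m : 0 <= maxa a m.
Proof. induction m; simpl. lra. eapply Rle_trans. apply IHm. apply Rmax_r. Qed.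

Lemma a_mul (a : nat -> R) (a_sub : forall m n : nat, a (m + n)%nat <= a m + a n) (q m r : nat) : a (q * m + r)%nat <= INR q * a m + a r.
Proof. induction q. simpl. lra. replace (S q * m + r)%nat with (m + (q * m + r))%nat by lia.
  eapply Rle_trans. apply a_sub. rewrite S_INR. lra. Qed.

Lemma fekete (a : nat -> R) (a_nn : forall n, 0 <= a n) (a_sub : forall m n : nat, a (m + n)%nat <= a m + a n) : exists L, Un_cv (fun n => a n / INR n) L.
Proof.
  set (E := fun r => exists n, (1 <= n)%nat /\ r = - (a n / INR n)).
  assert (HB : bound E).
  { exists 0. intros r [n [Hn ->]]. assert (0 < INR n) by (apply lt_0_INR; lia).
    assert (0 <= a n / INR n) by (apply div_nn; auto). lra. }
  assert (HE : exists r, E r) by (exists (- (a 1%nat / INR 1)); exists 1%nat; split; auto).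
  destruct (completeness E HB HE) as [M [HM1 HM2]].
  exists (- M).
  assert (Hlow : forall n, (1 <= n)%nat -> - M <= a n / INR n).
  { intros n Hn. assert (M >= - (a n / INR n)) by (apply Rle_ge, HM1; exists n; auto). lra. }
  assert (L0 : 0 <= - M).
  { assert (M <= 0). apply HM2. intros r [n [Hn ->]].
    assert (0 < INR n) by (apply lt_0_INR; lia).
    assert (0 <= a n / INR n) by (apply div_nn; auto). lra. lra. }
  assert (Hup : forall eps, 0 < eps -> exists m, (1 <= m)%nat /\ a m / INR m < - M + eps).
  { intros eps He. apply NNPP. intro Hn.
    assert (M <= M - eps); [|lra]. apply HM2. intros r [n [Hn' ->]].
    destruct (Rlt_le_dec (a n / INR n) (- M + eps)) as [H|H].
    - exfalso. apply Hn. exists n; auto.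
    - lra. }
  intros eps He. destruct (Hup (eps / 2)) as [m [Hm Ham]]; [lra|].
  set (C := maxa a m).
  assert (Cnn : 0 <= C) by apply maxa_nn.
  destruct (nat_big (2 * C / eps)) as [N HN].
  exists (S N). intros n Hn.
  assert (Hn0 : 0 < INR n) by (apply lt_0_INR; lia).
  assert (Hm0 : 0 < INR m) by (apply lt_0_INR; lia).
  assert (HNn : INR N < INR n) by (apply lt_INR; lia).
  pose proof (Hlow n ltac:(lia)).
  assert (Hdm : (n = (n / m) * m + n mod m)%nat) by (rewrite Nat.mul_comm; apply Nat.div_mod; lia).
  set (q := (n / m)%nat) in *. set (r := (n mod m)%nat) in *.
  assert (Hr : (r < m)%nat) by (apply Nat.mod_upper_bound; lia).
  assert (Han : a n <= INR q * a m + C).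
  { rewrite Hdm at 1. eapply Rle_trans. apply a_mul; auto. pose proof (maxa_ge a m r Hr). unfold C. lra. }
  assert (Hqm : INR q * INR m <= INR n).
  { rewrite <- mult_INR. apply le_INR. pose proof (Nat.le_add_r (q * m) r). lia. }
  assert (Ham' : a m < (- M + eps / 2) * INR m).
  { apply (Rmult_lt_compat_r (INR m)) in Ham; auto. unfold Rdiv in Ham.
    rewrite Rmult_assoc, Rinv_l in Ham by lra. lra. }
  assert (Hq0 : 0 <= INR q) by apply pos_INR.
  assert (HC : C < eps / 2 * INR n).
  { assert (2 * C / eps < INR n) by lra. apply (Rmult_lt_compat_r eps) in H0; auto.
    unfold Rdiv in H0. rewrite Rmult_assoc, Rinv_l in H0 by lra. lra. }
  assert (Hfin : a n < (- M + eps) * INR n).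
  { assert (INR q * a m <= (- M + eps / 2) * INR n).
    { destruct (Req_dec (INR q) 0) as [Z|Z]. rewrite Z. nra.
      assert (0 < INR q) by lra.
      apply Rle_trans with (INR q * ((- M + eps / 2) * INR m)). nra. nra. }
    lra. }
  assert (a n / INR n < - M + eps).
  { apply (Rmult_lt_reg_r (INR n)); auto. unfold Rdiv. rewrite Rmult_assoc, Rinv_l by lra. lra. }
  unfold R_dist. apply Rabs_def1; lra.
Qed.

Open Scope R_scope.

Lemma ln_le x y : 0 < x -> x <= y -> ln x <= ln y.
Proof. intros Hx [H|H]. left; apply ln_increasing; auto. subst; lra. Qed.

Lemma ln_nn x : 1 <= x -> 0 <= ln x.
Proof. intro H. rewrite <- ln_1. apply ln_le; lra. Qed.

Lemma entropy_gen d : d 0%nat = 1%nat -> exists (H : nat -> nat) L,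
  (forall n, factor_count d n (H n)) /\ (forall n, (1 <= H n)%nat) /\
  Un_cv (fun n => ln (INR (H n)) / INR n) L.
Proof. intro Hd.
  set (H := fun n => proj1_sig (constructive_indefinite_description _ (fc_exists d n))).
  assert (HH : forall n, factor_count d n (H n)).
  { intro n. unfold H. destruct (constructive_indefinite_description _ _); auto. }
  assert (H1 : forall n, (1 <= H n)%nat) by (intro n; eapply fc_pos; eauto).
  assert (HR : forall n, 1 <= INR (H n)) by (intro n; apply (le_INR 1); auto).
  destruct (fekete (fun n => ln (INR (H n)))) as [L HL].
  - intro n. apply ln_nn; auto.
  - intros m n. rewrite <- ln_mult by (pose proof (HR m); pose proof (HR n); lra).
    apply ln_le. pose proof (HR (m + n)%nat); lra. rewrite <- mult_INR. apply le_INR.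
    eapply fc_submult; eauto.
  - exists H, L. auto.
Qed.

Open Scope nat_scope.

Lemma allw_inv b n w : In w (allw b n) -> length w = n /\ (forall i, In i w -> i <= b).
Proof. revert w; induction n; intros w H.
  - destruct H as [<-|[]]. simpl; split; auto. intros i [].
  - cbn [allw] in H. apply in_flat_map in H. destruct H as [a [Ha Hw]].
    apply in_map_iff in Hw. destruct Hw as [w' [<- Hw']]. apply IHn in Hw'.
    apply in_seq in Ha. simpl. split. lia. intros i [<-|Hi]. lia. apply Hw'; auto.
Qed.

Lemma nodup_fm (A : list (list nat)) l : NoDup A -> NoDup l ->
  NoDup (flat_map (fun a => map (cons a) A) l).
Proof. intros HA. induction l as [|a l IH]; intro Hl; simpl. constructor.
  inversion Hl; subst. apply NoDup_app; auto.
  - apply FinFun.Injective_map_NoDup; auto. intros x y H; inversion H; auto.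
  - intros w Hw Hw'. apply in_map_iff in Hw. destruct Hw as [w1 [<- _]].
    apply in_flat_map in Hw'. destruct Hw' as [a' [Ha' Hw']].
    apply in_map_iff in Hw'. destruct Hw' as [w2 [E _]]. inversion E; subst. auto.
Qed.

Lemma allw_nodup b n : NoDup (allw b n).
Proof. induction n. simpl. constructor; auto. constructor. cbn [allw]. apply nodup_fm; auto. apply seq_NoDup. Qed.

Lemma allw_len n : length (allw 1 n) = 2 ^ n.
Proof. induction n. reflexivity. cbn [allw]. rewrite (flat_map_constant_length (c := length (allw 1 n))). rewrite length_seq, IHn. simpl. lia. intros; apply length_map. Qed.

Definition blk (a : nat) : list nat := if a =? 0 then [0;1] else [1;0].
Definition cw (s : list nat) : list nat := concat (map blk s).
Fixpoint dbl (l : list nat) : list nat := match l with [] => [] | a :: l => a :: a :: dbl l end.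

Lemma dbl_app l1 l2 : dbl (l1 ++ l2) = dbl l1 ++ dbl l2.
Proof. induction l1; simpl; auto. rewrite IHl1; auto. Qed.

Lemma dbl_len l : length (dbl l) = 2 * length l.
Proof. induction l; simpl; auto. rewrite IHl. lia. Qed.

Lemma cw_len s : length (cw s) = 2 * length s.
Proof. induction s; simpl; auto. unfold cw in *. simpl. rewrite length_app, IHs. unfold blk.
  destruct (a =? 0); simpl; lia. Qed.

Definition zs (s : list nat) : iword := apw (cw s) (fun _ => 0).
Definition xs (s : list nat) : iword := fun i => zs s (i / 2).

Lemma sub_dbl (z : iword) k L : sub (fun i => z (i / 2)) (2 * k) (2 * L) = dbl (sub z k L).
Proof. revert k; induction L; intro k. reflexivity.
  replace (2 * S L) with (S (S (2 * L))) by lia. cbn [sub dbl].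
  replace (2 * k / 2) with k by (rewrite Nat.mul_comm, Nat.div_mul; lia).
  replace (S (2 * k) / 2) with k.
  2:{ apply Nat.div_unique with 1; lia. }
  replace (S (S (2 * k))) with (2 * S k) by lia. rewrite IHL. auto.
Qed.

Lemma zs_bin s : binary (zs s).
Proof. intro i. unfold zs, apw. destruct (_ <? _); auto.
  assert (forall j, nth j (cw s) 0 <= 1); auto.
  induction s; intro j; simpl. destruct j; auto.
  unfold cw in *; simpl. destruct (Nat.lt_ge_cases j (length (blk a))).
  rewrite app_nth1 by auto. unfold blk in *. destruct (a =? 0); destruct j as [|[|]]; simpl in *; try lia.
  rewrite app_nth2 by auto. apply IHs.
Qed.

Lemma xs_in_M0 s : in_M (d_n 0) (xs s).
Proof.
  assert (Hd : forall i, d_n 0 i = if i =? 0 then 1 else 0).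
  { intro i. unfold d_n, prefix_periodic. destruct (i <? length (u 0)) eqn:E.
    - apply Nat.ltb_lt in E. simpl in E. replace i with 0 by lia. reflexivity.
    - apply Nat.ltb_ge in E. simpl in E. destruct i as [|i]; [lia|].
      generalize ((S i - length (u 0)) mod length (v 0)). intros k; destruct k as [|[|[|]]]; reflexivity. }
  assert (Bx : binary (xs s)) by (intro i; apply zs_bin).
  assert (Dx : forall i, xs s (2 * i) = xs s (2 * i + 1)).
  { intro i. unfold xs. f_equal. rewrite Nat.mul_comm, Nat.div_mul by lia.
    apply Nat.div_unique with 1; lia. }
  split. intro i. rewrite Hd. simpl. apply Bx.
  intro k. set (y := shift (xs s) k).
  destruct (Nat.eq_dec (y 0) 1) as [Y0|Y0].
  2:{ right. exists 0. split. intros; lia. simpl. rewrite Hd. simpl. specialize (Bx (k+0)).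
      unfold y, shift in *. lia. }
  destruct (classic (exists j, y (S j) = 1)) as [Hj|Hn].
  - apply least_ex in Hj. destruct Hj as [j [Hj Hl]].
    assert (Hz : forall i, 1 <= i -> i <= j -> y i = 0).
    { intros i H1 H2. destruct i; [lia|]. destruct (Nat.eq_dec i j). lia.
      pose proof (Hl i ltac:(lia)). pose proof (Bx (k + S i)). unfold y, shift in *. lia. }
    destruct (Nat.even (S j)) eqn:Ev.
    + exfalso. apply Nat.even_spec in Ev. destruct Ev as [h Hh].
      destruct (Nat.Even_or_Odd k) as [[g Hg]|[g Hg]].
      * (* k even: y 1 = y 0 = 1 *)
        assert (y 1 = 1). { unfold y, shift in *. rewrite Hg in *. rewrite <- Dx. rewrite Nat.add_0_r in Y0. auto. }
        assert (y 1 = 0) by (apply Hz; lia). lia.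
      * assert (y j = 1).
        { unfold y, shift in *. replace (k + j) with (2 * (g + h)) by lia.
          rewrite Dx. replace (2 * (g + h) + 1) with (k + S j) by lia. auto. }
        assert (y j = 0) by (apply Hz; lia). lia.
    + right. exists (S j). split.
      * intros i Hi. rewrite Hd. destruct i. simpl. auto. simpl. symmetry. apply Hz; lia.
      * rewrite Ev. rewrite Hd. simpl. fold y. lia.
  - left. intro i. rewrite Hd. destruct i; simpl. auto.
    specialize (Bx (k + S i)). destruct (Nat.eq_dec (y (S i)) 1). exfalso; eauto.
    unfold y, shift in *. lia.
Qed.

Definition Phin (n : nat) (x : iword) : iword := Nat.iter n Phi x.
Definition phin (n : nat) (w : list nat) : list nat := Nat.iter n phi w.

Lemma Phin_ext n x y : eqw x y -> eqw (Phin n x) (Phin n y).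
Proof. induction n; simpl; auto. intro H. apply Phi_ext. apply IHn; auto. Qed.

Lemma Phin_app n w X : eqw (Phin n (apw w X)) (apw (phin n w) (Phin n X)).
Proof. induction n; simpl. apply eqw_refl.
  eapply eqw_trans. apply Phi_ext, IHn. apply Phi_app. Qed.

Lemma Phin_in_M n x : in_M (d_n 0) x -> in_M (d_n n) (Phin n x).
Proof. intro H. induction n; simpl; auto.
  eapply in_M_ext. apply eqw_sym, dn_S. apply eqw_refl.
  apply Fwd; auto. apply dn_bin. apply dn_0_1. Qed.

Lemma phin_app n w1 w2 : phin n (w1 ++ w2) = phin n w1 ++ phin n w2.
Proof. induction n; simpl; auto. unfold phin in *. simpl. rewrite IHn, phi_app; auto. Qed.

Definition binl (w : list nat) := forall i, In i w -> i <= 1.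

Lemma phi_binl w : binl (phi w).
Proof. induction w; intros i Hi. contradiction. rewrite phi_cons in Hi.
  apply in_app_or in Hi. destruct Hi; auto. destruct a; simpl in H; lia. Qed.

Lemma phi_inj w : forall w', binl w -> binl w' -> phi w = phi w' -> w = w'.
Proof. induction w as [|a w IH]; intros w' Hw Hw' E.
  - destruct w' as [|b w']; auto. rewrite phi_cons in E. destruct b; simpl in E; discriminate.
  - destruct w' as [|b w']. rewrite phi_cons in E. destruct a; simpl in E; discriminate.
    rewrite !phi_cons in E.
    assert (Ha : a <= 1) by (apply Hw; simpl; auto). assert (Hb : b <= 1) by (apply Hw'; simpl; auto).
    assert (Hw1 : binl w) by (intros i Hi; apply Hw; simpl; auto).
    assert (Hw1' : binl w') by (intros i Hi; apply Hw'; simpl; auto).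
    destruct a as [|[|]]; destruct b as [|[|]]; try lia; simpl in E.
    + inversion E. f_equal. apply IH; auto.
    + inversion E. exfalso. destruct w as [|c w]. discriminate. rewrite phi_cons in H0.
      destruct c; discriminate.
    + inversion E. exfalso. destruct w' as [|c w']. discriminate. rewrite phi_cons in H0.
      destruct c; discriminate.
    + inversion E. f_equal. apply IH; auto.
Qed.

Lemma phin_inj n w w' : binl w -> binl w' -> phin n w = phin n w' -> w = w'.
Proof. revert w w'; induction n; simpl; auto. intros w w' Hw Hw' E.
  apply IHn; auto. apply phi_inj; auto; destruct n; simpl; auto; apply phi_binl.
Qed.

Lemma dbl_inj l : forall l', dbl l = dbl l' -> l = l'.
Proof. induction l; intros [|b l'] E; simpl in E; try discriminate; auto.
  inversion E. f_equal. auto. Qed.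

Lemma cw_inj s : forall s', binl s -> binl s' -> cw s = cw s' -> s = s'.
Proof. induction s as [|a s IH]; intros [|b s'] Hs Hs' E; unfold cw in E; simpl in E; auto.
  - unfold blk in E; destruct (b =? 0); discriminate.
  - unfold blk in E; destruct (a =? 0); discriminate.
  - assert (Ha : a <= 1) by (apply Hs; simpl; auto). assert (Hb : b <= 1) by (apply Hs'; simpl; auto).
    destruct a as [|[|]]; destruct b as [|[|]]; try lia; simpl in E; inversion E; f_equal;
    apply IH; auto; intros i Hi; [apply Hs|apply Hs'|apply Hs|apply Hs']; simpl; auto.
Qed.

Lemma dbl_cw_binl s : binl (dbl (cw s)).
Proof. induction s; intros i Hi. contradiction. unfold cw in *. simpl in Hi.
  rewrite dbl_app in Hi. apply in_app_or in Hi. destruct Hi as [Hi|Hi]; auto.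
  unfold blk in Hi; destruct (a =? 0); simpl in Hi; lia. Qed.

Definition Fam (n : nat) (s : list nat) : list nat := phin n (dbl (cw s)).

Lemma Fam_factor n s : M_factor (d_n n) (Fam n s).
Proof.
  pose proof (Phin_in_M n (xs s) (xs_in_M0 s)) as HM.
  set (L := length (cw s)).
  assert (E1 : sub (xs s) 0 (2 * L) = dbl (cw s)).
  { rewrite <- (Nat.mul_0_r 2). unfold xs. rewrite sub_dbl. unfold zs. unfold L. rewrite sub_app0. auto. }
  assert (E2 : eqw (Phin n (xs s)) (apw (Fam n s) (Phin n (shift (xs s) (2 * L))))).
  { eapply eqw_trans. apply Phin_ext, prefix_split. rewrite E1. apply Phin_app. }
  rewrite <- (sub_app0 (Fam n s) (Phin n (shift (xs s) (2 * L)))).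
  rewrite <- (sub_ext _ _ _ _ E2). apply M_factor_sub; auto.
Qed.

Lemma Fam_len n s : length (Fam n s) = length s * (2 * length (phin n [0]) + 2 * length (phin n [1])).
Proof. induction s as [|a s IH].
  { unfold Fam. change (dbl (cw [])) with (@nil nat).
    assert (phin n [] = []) as ->. { induction n. reflexivity. unfold phin in *. simpl. rewrite IHn. reflexivity. }
    reflexivity. }
  unfold Fam in *. unfold cw in *. simpl. rewrite dbl_app, phin_app, length_app, IH.
  unfold blk. destruct (a =? 0); simpl.
  - change [0;0;1;1] with ([0] ++ [0] ++ [1] ++ [1]). rewrite !phin_app, !length_app. lia.
  - change [1;1;0;0] with ([1] ++ [1] ++ [0] ++ [0]). rewrite !phin_app, !length_app. lia.
Qed.

Lemma phin_len n w : length w <= length (phin n w).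
Proof. induction n; simpl; auto. eapply Nat.le_trans. apply IHn. apply phi_len_ge. Qed.

Lemma part1_lower n : exists K, 1 <= K /\ forall t c, factor_count (d_n n) (t * K) c -> 2 ^ t <= c.
Proof. exists (2 * length (phin n [0]) + 2 * length (phin n [1])). split.
  pose proof (phin_len n [0]). simpl in H. lia.
  intros t c Hc. rewrite <- allw_len. rewrite <- (length_map (Fam n)).
  apply (count_lower _ _ _ _ Hc).
  - apply NoDup_map_NoDup_ForallPairs. intros s s' Hs Hs' E.
    apply allw_inv in Hs, Hs'. apply cw_inj. exact (proj2 Hs). exact (proj2 Hs'). apply dbl_inj.
    apply (phin_inj n); auto using dbl_cw_binl.
    apply allw_nodup.
  - intros w Hw. apply in_map_iff in Hw. destruct Hw as [s [<- Hs]]. split.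
    rewrite Fam_len. apply allw_inv in Hs. destruct Hs as [-> _]. auto.
    apply Fam_factor.
Qed.

Open Scope nat_scope.

Lemma firstn_rep (c n m : nat) : firstn n (repeat c m) = repeat c (Nat.min n m).
Proof. revert m; induction n; intros [|m]; simpl; auto. rewrite IHn; auto. Qed.

Lemma skipn_rep (c n m : nat) : skipn n (repeat c m) = repeat c (m - n).
Proof. revert m; induction n; intros [|m]; simpl; auto. Qed.

Lemma window a b X k n : exists a' b' k', a' + b' <= n /\ (k' = 0 \/ a' + b' = 0) /\
  sub (apw (repeat 0 a ++ repeat 1 b) X) k n = repeat 0 a' ++ repeat 1 b' ++ sub X k' (n - a' - b').
Proof.
  set (w := repeat 0 a ++ repeat 1 b).
  assert (Lw : length w = a + b) by (unfold w; rewrite length_app, !repeat_length; auto).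
  assert (Sk : skipn k w = repeat 0 (a - k) ++ repeat 1 (b - (k - a))).
  { unfold w. rewrite skipn_app, !skipn_rep, repeat_length. auto. }
  destruct (Nat.le_gt_cases (a + b) k) as [H1|H1].
  - exists 0, 0, (k - (a + b)). split; [lia|]. split; [auto|].
    rewrite sub_app_ge by lia. rewrite Lw. simpl. f_equal. lia.
  - destruct (Nat.le_gt_cases (a + b) (k + n)) as [H2|H2].
    + exists (a - k), (b - (k - a)), 0. split; [lia|]. split; [auto|].
      rewrite sub_app_mid by lia. rewrite Sk, <- app_assoc. f_equal. f_equal. f_equal. lia.
    + exists (Nat.min n (a - k)), (n - Nat.min n (a - k)), 0. split; [lia|]. split; [auto|].
      rewrite sub_app_lt by lia. rewrite Sk. rewrite firstn_app, !firstn_rep, !repeat_length.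
      replace (n - Nat.min n (a - k) - (n - Nat.min n (a - k))) with 0 by lia. simpl.
      rewrite app_nil_r. f_equal. f_equal. lia.
Qed.

Lemma Phi_zero : eqw (Phi (fun _ => 0)) (fun _ => 1).
Proof. apply (fix_unique [1]). discriminate.
  - eapply eqw_trans. apply Phi_unfold. simpl. apply app_ext. apply Phi_ext. intro; reflexivity.
  - intro i. destruct i; reflexivity.
Qed.

Lemma phi_rep0 b : phi (repeat 0 b) = repeat 1 b.
Proof. induction b. reflexivity. change (repeat 0 (S b)) with (0 :: repeat 0 b). rewrite phi_cons, IHb. auto. Qed.

Lemma decomp x : in_M phi_inf x ->
  eqw x (fun _ => 0) \/ (exists m, eqw x (apw (repeat 0 m) (fun _ => 1))) \/
  (exists a b z, in_M phi_inf z /\ eqw x (apw (repeat 0 a ++ repeat 1 b) (Phi (Phi z)))).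
Proof. intro H.
  assert (HM : in_M (Phi phi_inf) x) by (eapply in_M_ext; [apply phi_inf_fix|apply eqw_refl|auto]).
  destruct (Bwd _ _ phi_inf_bin phi_inf_0 HM) as [H0|[m [y [Hy Ex]]]]; auto.
  right. assert (HMy : in_M (Phi phi_inf) y) by (eapply in_M_ext; [apply phi_inf_fix|apply eqw_refl|auto]).
  destruct (Bwd _ _ phi_inf_bin phi_inf_0 HMy) as [H0|[b [z [Hz Ey]]]].
  - left. exists m. eapply eqw_trans. apply Ex. apply app_ext.
    eapply eqw_trans. apply Phi_ext, H0. apply Phi_zero.
  - right. exists m, b, z. split; auto. eapply eqw_trans. apply Ex.
    eapply eqw_trans. 2: apply app_app. apply app_ext.
    eapply eqw_trans. apply Phi_ext, Ey. rewrite <- phi_rep0. apply Phi_app.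
Qed.

Lemma Phi2_prefix z q : eqw (Phi (Phi z)) (apw (phi (phi (sub z 0 q))) (Phi (Phi (shift z q)))).
Proof. eapply eqw_trans. apply Phi_ext, Phi_prefix. apply Phi_app. Qed.

Lemma phi2_cons a w : phi (phi (a :: w)) = phi (phi_letter a) ++ phi (phi w).
Proof. rewrite phi_cons, phi_app. auto. Qed.

Lemma phi2_len w : 3 * length w <= length (phi (phi w)).
Proof. induction w. simpl; lia. rewrite phi2_cons, length_app. simpl length.
  destruct a; simpl; lia. Qed.

Lemma Phi2_pref_win z L M : L <= 3 * M -> sub (Phi (Phi z)) 0 L = firstn L (phi (phi (sub z 0 M))).
Proof. intro H. rewrite (sub_ext _ _ _ _ (Phi2_prefix z M)). rewrite sub_app_lt. auto.
  pose proof (phi2_len (sub z 0 M)). rewrite sub_length in H0. lia. Qed.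

Lemma Phi2_win z k n M : n + 4 <= 3 * M -> exists q r, r < 5 /\
  sub (Phi (Phi z)) k n = firstn n (skipn r (phi (phi (sub z q M)))).
Proof. intro H.
  destruct (pos_cover (fun q => length (phi (phi (sub z 0 q))))) with (k := k) as [q Hq].
  - reflexivity.
  - intro q. rewrite sub_S, phi_app, phi_app, length_app. rewrite phi_single.
    destruct (z (0 + q)); simpl; lia.
  - cbv beta in Hq. exists q, (k - length (phi (phi (sub z 0 q)))).
    assert (Hl : length (phi (phi (sub z 0 (S q)))) <= length (phi (phi (sub z 0 q))) + 5).
    { rewrite sub_S, phi_app, phi_app, length_app. rewrite phi_single. destruct (z (0 + q)); simpl; lia. }
    split. lia.
    rewrite (sub_ext _ _ _ _ (Phi2_prefix z q)). rewrite sub_app_ge by lia.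
    rewrite (sub_ext _ _ _ _ (Phi2_prefix (shift z q) M)). rewrite sub_app_lt.
    rewrite sub_shift, Nat.add_0_r. auto.
    pose proof (phi2_len (sub (shift z q) 0 M)). rewrite sub_length in H0. lia.
Qed.

Lemma part2_bound N c c' : factor_count phi_inf (3 * N) c -> factor_count phi_inf (N + 2) c' ->
  c <= ((3 * N + 1) * (3 * N + 1) + 5 + (3 * N + 1)) * c'.
Proof. intros Hc Hc'.
  assert (P1 : 1 <= c') by (eapply fc_pos; [apply phi_inf_0|eauto]).
  destruct (fc_list _ _ _ Hc') as [L [HL HL']].
  set (n3 := 3 * N) in *.
  set (C1 := flat_map (fun a => flat_map (fun b =>
               map (fun p => repeat 0 a ++ repeat 1 b ++ firstn (n3 - a - b) (phi (phi p))) L)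
               (seq 0 (S n3))) (seq 0 (S n3))).
  set (C2 := flat_map (fun r => map (fun p => firstn n3 (skipn r (phi (phi p)))) L) (seq 0 5)).
  set (C3 := map (fun a => repeat 0 a ++ repeat 1 (n3 - a)) (seq 0 (S n3))).
  assert (L1 : length C1 = S n3 * (S n3 * c')).
  { unfold C1. rewrite (flat_map_constant_length (c := S n3 * c')). rewrite length_seq; auto.
    intros a _. rewrite (flat_map_constant_length (c := c')). rewrite length_seq; auto.
    intros b _. rewrite length_map; auto. }
  assert (L2 : length C2 = 5 * c').
  { unfold C2. rewrite (flat_map_constant_length (c := c')). rewrite length_seq; auto.
    intros r _. rewrite length_map; auto. }
  assert (L3 : length C3 = S n3) by (unfold C3; rewrite length_map, length_seq; auto).
  assert (Hle : c <= length (C1 ++ C2 ++ C3)).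
  { apply (count_upper _ _ _ _ Hc). intros w Hw HF.
    destruct (M_factor_inv _ _ HF) as [x [k [Hx Ew]]]. rewrite Hw in Ew.
    apply in_or_app. rewrite in_app_iff.
    destruct (decomp x Hx) as [H0|[[m Hm]|[a [b [z [Hz Hxz]]]]]].
    - right; right. rewrite Ew, (sub_ext _ _ _ _ H0), sub_const.
      apply in_map_iff. exists n3. split. rewrite Nat.sub_diag. simpl. apply app_nil_r.
      apply in_seq. lia.
    - right; right. assert (E2 : eqw x (apw (repeat 0 m ++ repeat 1 0) (fun _ => 1)))
        by (simpl; rewrite app_nil_r; auto).
      destruct (window m 0 (fun _ => 1) k n3) as [a' [b' [k' [H1 [H2 H3]]]]].
      rewrite Ew, (sub_ext _ _ _ _ E2), H3, sub_const.
      apply in_map_iff. exists a'. split.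
      + rewrite <- repeat_app. f_equal. f_equal. lia.
      + apply in_seq. lia.
    - destruct (window a b (Phi (Phi z)) k n3) as [a' [b' [k' [H1 [[H2|H2] H3]]]]];
        rewrite Ew, (sub_ext _ _ _ _ Hxz), H3.
      + left. subst k'. rewrite (Phi2_pref_win z (n3 - a' - b') (N + 2)) by lia.
        apply in_flat_map. exists a'. split. apply in_seq; lia.
        apply in_flat_map. exists b'. split. apply in_seq; lia.
        apply in_map_iff. exists (sub z 0 (N + 2)). split; auto.
        apply HL'. apply sub_length. apply M_factor_sub; auto.
      + right; left. assert (a' = 0) by lia. assert (b' = 0) by lia. subst a' b'. simpl.
        destruct (Phi2_win z k' (n3 - 0 - 0) (N + 2)) as [q [r [Hr Er]]]. lia.
        rewrite Er. apply in_flat_map. exists r. split. apply in_seq; lia.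
        apply in_map_iff. exists (sub z q (N + 2)). split. f_equal. lia.
        apply HL'. apply sub_length. apply M_factor_sub; auto. }
  rewrite !length_app, L1, L2, L3 in Hle. unfold n3 in *. nia.
Qed.

Open Scope R_scope.

Lemma ln_le_lin x : 0 < x -> ln x <= x - 1.
Proof. intro H. pose proof (exp_ineq1_le (ln x)). rewrite exp_ln in H0; auto. lra. Qed.

Lemma cv_bounds (u : nat -> R) L eps : Un_cv u L -> 0 < eps ->
  exists N, forall n, (n >= N)%nat -> L - eps < u n < L + eps.
Proof. intros Hu He. destruct (Hu eps He) as [N HN]. exists N. intros n Hn.
  specialize (HN n Hn). unfold R_dist in HN. apply Rabs_def2 in HN. lra. Qed.

Lemma div_bounds a n lo hi : 0 < n -> lo < a / n < hi -> lo * n < a < hi * n.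
Proof. intros Hn [H1 H2]. assert (E : a = (a / n) * n) by (field; lra).
  split; rewrite E; apply Rmult_lt_compat_r; auto. Qed.

Lemma div_lt a n hi : 0 < n -> a / n < hi -> a < hi * n.
Proof. intros Hn H. assert (E : a = (a / n) * n) by (field; lra).
  rewrite E. apply Rmult_lt_compat_r; auto. Qed.

Lemma div_gt a n lo : 0 < n -> lo < a / n -> lo * n < a.
Proof. intros Hn H. assert (E : a = (a / n) * n) by (field; lra).
  rewrite E at 1. apply Rmult_lt_compat_r; auto. Qed.

Lemma part1 n : exists h : R, 0 < h /\ has_entropy (d_n n) h.
Proof.
  destruct (entropy_gen (d_n n) (dn_0_1 n)) as [Hf [L [HH [H1 HL]]]].
  exists L. split; [|exists Hf; auto].
  destruct (part1_lower n) as [K [HK HK']].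
  assert (Kp : 0 < INR K) by (apply lt_0_INR; lia).
  pose proof ln_lt_2 as l2.
  assert (ln 2 / INR K <= L).
  { apply Rnot_lt_le. intro Hlt.
    destruct (cv_bounds _ _ (ln 2 / INR K - L) HL) as [N HN]; [lra|].
    set (t := S N). set (m := (t * K)%nat).
    assert (Hm : (m >= N)%nat) by (unfold m, t; nia).
    specialize (HN m Hm). destruct HN as [_ HN].
    assert (Hmp : 0 < INR m) by (apply lt_0_INR; unfold m, t; nia).
    assert (Hc : (2 ^ t <= Hf m)%nat) by (apply HK'; apply HH).
    assert (Ha : INR t * ln 2 <= ln (INR (Hf m))).
    { rewrite <- ln_pow by lra. apply ln_le. apply pow_lt; lra.
      replace 2 with (INR 2) by (simpl; lra). rewrite <- pow_INR. apply le_INR; auto. }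
    assert (Em : INR m = INR t * INR K) by (unfold m; apply mult_INR).
    assert (ln (INR (Hf m)) < ln 2 * INR t).
    { assert (Hd : ln (INR (Hf m)) / INR m < ln 2 / INR K) by lra.
      pose proof (div_lt _ _ _ Hmp Hd) as Hmp'. rewrite Em in Hmp'.
      replace (ln 2 / INR K * (INR t * INR K)) with (ln 2 * INR t) in Hmp' by (field; lra). auto. }
    lra. }
  apply Rlt_le_trans with (ln 2 / INR K); auto. apply Rdiv_lt_0_compat; lra.
Qed.

Lemma part2 : has_entropy phi_inf 0.
Proof.
  destruct (entropy_gen phi_inf phi_inf_0) as [Hf [L [HH [H1 HL]]]].
  exists Hf. split; auto.
  set (a := fun n => ln (INR (Hf n))).
  assert (Ha0 : forall n, 0 <= a n) by (intro n; apply ln_nn; apply (le_INR 1); auto).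
  assert (L0 : 0 <= L).
  { apply Rnot_lt_le. intro Hlt. destruct (cv_bounds _ _ (- L) HL) as [N HN]; [lra|].
    specialize (HN (S N) ltac:(lia)). destruct HN as [_ HN].
    assert (0 <= a (S N) / INR (S N)) by (apply div_nn; auto; apply lt_0_INR; lia).
    unfold a in H. lra. }
  destruct (Req_dec L 0) as [->|Lne]; auto.
  assert (Lp : 0 < L) by lra. exfalso.
  destruct (cv_bounds _ _ (L / 4) HL) as [N0 HN0]; [lra|].
  assert (HB : forall n, (n >= N0)%nat -> (1 <= n)%nat -> 3 * L / 4 * INR n < a n < 5 * L / 4 * INR n).
  { intros n Hn Hn1. assert (0 < INR n) by (apply lt_0_INR; lia).
    destruct (HN0 n Hn) as [Hl Hu]. cbv beta in Hl, Hu. unfold a. split.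
    - apply div_gt; auto. lra.
    - apply div_lt; auto. lra. }
  destruct (nat_big ((20 + 4 * L) / L + INR N0 + 2)) as [M HM].
  assert (HM0 : 0 <= INR N0) by apply pos_INR.
  assert (HM1 : (20 + 4 * L) / L < INR M) by (assert (0 <= INR N0) by apply pos_INR; lra).
  assert (HMN : INR N0 + 2 < INR M) by (assert (0 <= (20 + 4 * L) / L) by (apply div_nn; lra); lra).
  assert (HMN' : (N0 + 2 < M)%nat) by (apply INR_lt; rewrite plus_INR; simpl; lra).
  set (N := (M * M - 1)%nat).
  assert (EN : INR N = INR M * INR M - 1).
  { unfold N. rewrite minus_INR by nia. rewrite mult_INR. simpl. lra. }
  assert (HNN0 : (N >= N0)%nat) by (unfold N; nia).
  destruct (HB (3 * N)%nat ltac:(lia) ltac:(unfold N; nia)) as [Hl3 _].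
  destruct (HB (N + 2)%nat ltac:(lia) ltac:(lia)) as [_ Hu2].
  set (Q := ((3 * N + 1) * (3 * N + 1) + 5 + (3 * N + 1))%nat).
  assert (HQ : (Hf (3 * N) <= Q * Hf (N + 2))%nat) by (apply part2_bound; auto).
  assert (HQ16 : (Q <= 16 * (M * M * (M * M)))%nat) by (unfold Q, N; nia).
  assert (Qp : 0 < INR Q) by (apply lt_0_INR; unfold Q; lia).
  assert (Hp2 : 1 <= INR (Hf (N + 2)%nat)) by (apply (le_INR 1); auto).
  assert (Ha3 : a (3 * N)%nat <= ln (INR Q) + a (N + 2)%nat).
  { unfold a. rewrite <- ln_mult by lra. apply ln_le. pose proof (H1 (3 * N)%nat).
    apply lt_0_INR; lia. rewrite <- mult_INR. apply le_INR; auto. }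
  assert (Mp : 0 < INR M) by lra.
  assert (HlnQ : ln (INR Q) <= 15 + 4 * INR M).
  { apply Rle_trans with (ln (16 * (INR M * INR M * (INR M * INR M)))).
    apply ln_le; auto. replace 16 with (INR 16) by (simpl; lra). rewrite <- !mult_INR.
    apply le_INR; auto.
    rewrite !ln_mult by (try apply Rmult_lt_0_compat; try apply Rmult_lt_0_compat; lra).
    pose proof (ln_le_lin 16 ltac:(lra)). pose proof (ln_le_lin (INR M) Mp). lra. }
  assert (E3 : INR (3 * N) = 3 * INR N) by (rewrite mult_INR; simpl; lra).
  assert (E2 : INR (N + 2) = INR N + 2) by (rewrite plus_INR; simpl; lra).
  rewrite E3 in Hl3. rewrite E2 in Hu2. rewrite EN in Hl3, Hu2.
  assert (L * (INR M * INR M) < 15 + 4 * INR M + 4 * L) by nra.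
  assert (20 + 4 * L < L * INR M).
  { assert (E : (20 + 4 * L) = (20 + 4 * L) / L * L) by (field; lra). rewrite E at 1. nra. }
  nra.
Qed.

Theorem proposition5 :
  (forall n : nat, exists h : R, 0 < h /\ has_entropy (d_n n) h) /\
  has_entropy phi_inf 0.
Proof. split. apply part1. apply part2. Qed.
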